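(* Let $\mathcal{H}=\mathbb{R}\times\mathbb{R}\times\,]0,+\infty[$. The map associating to an irreducible planar Keplerian branch around ${\rm O}$ the parameters $(\alpha,\beta,\gamma)$ of its unifocal equation $r=\alpha x+\beta y+\gamma$ is a bijection from the space of irreducible planar Keplerian branches around ${\rm O}$ onto $\mathcal{H}$. Under this bijection: the set of irreducible Keplerian branches passing through a point ${\rm A}\neq{\rm O}$ is the intersection with $\mathcal{H}$ of a plane which cuts the boundary $\{\gamma=0\}$ of $\mathcal{H}$; the set of irreducible Keplerian branches passing through two points ${\rm A}$ and ${\rm B}$ not located on the same ray from ${\rm O}$ is the intersection with $\mathcal{H}$ of a straight line; this line cuts the boundary of $\mathcal{H}$, except if ${\rm O}$ lies on the open segment $]{\rm A},{\rm B}[$, in which case the line is contained in $\mathcal{H}$ and $\gamma$ is constant on the line.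
   Context: Work in the Euclidean plane $\mathbb{R}^2={\rm O}xy$ with origin ${\rm O}$, $r=\sqrt{x^2+y^2}$, and Newton's system $\ddot q=-q/r^3$. An extended solution is a continuous path $t\mapsto q(t)$ which is an analytic solution except at a discrete set of collision times where $q={\rm O}$, at which the motion bounces back along the same ray with the same energy; a Keplerian branch around ${\rm O}$ is the image of an extended solution. A branch is irreducible if it is not contained in a line (i.e. it is not rectilinear). For a nonrectilinear solution $q=(x,y)$, with $C=x\dot y-y\dot x$, $\alpha=\frac{x}{r}-\dot yC$, $\beta=\frac{y}{r}+\dot xC$ (constants of motion) and $\gamma=C^2>0$, the branch is exactly the set of points satisfying $r=\alpha x+\beta y+\gamma$, called its unifocal equation. A ray is a closed half-line from ${\rm O}$. *)

(* Defs.v *)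
From Stdlib Require Import Reals.
From Coquelicot Require Import Coquelicot.
Open Scope R_scope.

Definition radius (p : R * R) : R := sqrt (fst p ^ 2 + snd p ^ 2).

Definition collision (x y : R -> R) (t : R) : Prop := x t = 0 /\ y t = 0.

Definition newton_at (x y : R -> R) (t : R) : Prop :=
  let r := radius (x t, y t) in
  ex_derive x t /\ ex_derive y t /\
  is_derive (Derive x) t (- x t / r ^ 3) /\
  is_derive (Derive y) t (- y t / r ^ 3).

Definition energy (x y : R -> R) (t : R) : R :=
  ((Derive x t) ^ 2 + (Derive y t) ^ 2) / 2 - / radius (x t, y t).

(* At a collision time t0 the motion bounces back along the same ray with the
   same energy: near t0 (before and after) the motion stays on one ray of
   direction u, and the energy before t0 equals the energy after t0. *)
Definition bounce (x y : R -> R) (t0 : R) : Prop :=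
  exists u1 u2 eps, (u1, u2) <> (0, 0) /\ 0 < eps /\
    (forall t, Rabs (t - t0) < eps ->
       exists s, 0 <= s /\ x t = s * u1 /\ y t = s * u2) /\
    (forall t1 t2, t0 - eps < t1 < t0 -> t0 < t2 < t0 + eps ->
       energy x y t1 = energy x y t2).

Definition extended_solution (x y : R -> R) : Prop :=
  (forall t, continuous x t /\ continuous y t) /\
  (forall t, ~ collision x y t -> newton_at x y t) /\
  (forall t0, collision x y t0 ->
     (exists eps, 0 < eps /\
        forall t, 0 < Rabs (t - t0) < eps -> ~ collision x y t) /\
     bounce x y t0).

Definition keplerian_branch (K : R * R -> Prop) : Prop :=
  exists x y : R -> R, extended_solution x y /\
    forall p, K p <-> exists t, p = (x t, y t).

Definition irreducible (K : R * R -> Prop) : Prop :=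
  ~ (exists a b c, (a, b) <> (0, 0) /\
       forall p, K p -> a * fst p + b * snd p + c = 0).

Definition unifocal (al be ga : R) (p : R * R) : Prop :=
  radius p = al * fst p + be * snd p + ga.

Definition same_ray (A B : R * R) : Prop :=
  exists u1 u2 s t, (u1, u2) <> (0, 0) /\ 0 <= s /\ 0 <= t /\
    A = (s * u1, s * u2) /\ B = (t * u1, t * u2).

Definition O_in_open_segment (A B : R * R) : Prop :=
  exists t, 0 < t < 1 /\
    (1 - t) * fst A + t * fst B = 0 /\ (1 - t) * snd A + t * snd B = 0.

(* Main.v *)
Require Import Defs.
From Stdlib Require Import Reals Lra Psatz Classical Ranalysis5 ClassicalEpsilon Nsatz.
From Coquelicot Require Import Coquelicot.
Open Scope R_scope.

Lemma is_derive_eq (f : R -> R) x l l' : is_derive f x l -> l = l' -> is_derive f x l'.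
Proof. intros H ->; exact H. Qed.

Lemma cont_eps (f : R -> R) t : continuous f t ->
  forall eps, 0 < eps -> exists d, 0 < d /\ forall s, Rabs (s - t) < d -> Rabs (f s - f t) < eps.
Proof.
  intros Hc eps He.
  assert (H := proj2 (continuity_pt_filterlim f t) Hc).
  destruct (H eps He) as [d [Hd Hd']].
  exists d; split; auto. intros s Hs.
  destruct (Req_dec s t) as [->|Hne].
  - rewrite Rminus_diag, Rabs_R0; auto.
  - apply Hd'. split. split. exact I. auto. exact Hs.
Qed.

Lemma derive_cont (f : R -> R) t l : is_derive f t l -> continuity_pt f t.
Proof.
  intros H. apply continuity_pt_filterlim. apply (@ex_derive_continuous R_AbsRing R_NormedModule). exists l; exact H.
Qed.

Lemma const_on (f : R -> R) a b : (forall s, a < s < b -> is_derive f s 0) ->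
  forall s1 s2, a < s1 < b -> a < s2 < b -> f s1 = f s2.
Proof.
  intros H s1 s2 H1 H2.
  destruct (MVT_gen f s1 s2 (fun _ => 0)) as [c [_ Hc]].
  - intros z Hz. apply H. split.
    + apply Rlt_trans with (Rmin s1 s2); [apply Rmin_glb_lt; lra | lra].
    + apply Rlt_trans with (Rmax s1 s2); [lra | apply Rmax_lub_lt; lra].
  - intros z Hz. apply derive_cont with 0. apply H. split.
    + apply Rlt_le_trans with (Rmin s1 s2); [apply Rmin_glb_lt; lra | lra].
    + apply Rle_lt_trans with (Rmax s1 s2); [lra | apply Rmax_lub_lt; lra].
  - lra.
Qed.

Lemma const_R (f : R -> R) : (forall s, is_derive f s 0) -> forall s1 s2, f s1 = f s2.
Proof.
  intros H s1 s2. apply (const_on f (Rmin s1 s2 - 1) (Rmax s1 s2 + 1)).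
  intros; apply H.
  split; [generalize (Rmin_l s1 s2) | generalize (Rmax_l s1 s2)]; lra.
  split; [generalize (Rmin_r s1 s2) | generalize (Rmax_r s1 s2)]; lra.
Qed.

Lemma loc_of (P : R -> Prop) z d : 0 < d -> (forall s, Rabs (s - z) < d -> P s) -> locally z P.
Proof. intros Hd H. exists (mkposreal d Hd). intros s Hs. apply H. exact Hs. Qed.


Lemma D_mult (f g : R -> R) (t df dg : R) : is_derive f t df -> is_derive g t dg ->
  is_derive (fun s => f s * g s) t (df * g t + f t * dg).
Proof. intros Hf Hg. apply (is_derive_mult f g t df dg Hf Hg). intros; apply Rmult_comm. Qed.
Lemma D_plus (f g : R -> R) (t df dg : R) : is_derive f t df -> is_derive g t dg ->
  is_derive (fun s => f s + g s) t (df + dg).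
Proof. intros Hf Hg. apply (@is_derive_plus R_AbsRing R_NormedModule f g t df dg Hf Hg). Qed.
Lemma D_minus (f g : R -> R) (t df dg : R) : is_derive f t df -> is_derive g t dg ->
  is_derive (fun s => f s - g s) t (df - dg).
Proof. intros Hf Hg. apply (@is_derive_minus R_AbsRing R_NormedModule f g t df dg Hf Hg). Qed.
Lemma D_const (a t : R) : is_derive (fun _ => a) t 0.
Proof. apply (@is_derive_const R_AbsRing R_NormedModule). Qed.
Lemma D_id (t : R) : is_derive (fun s => s) t 1.
Proof. apply (@is_derive_id R_AbsRing). Qed.
Lemma D_comp (f g : R -> R) (t df dg : R) : is_derive f (g t) df -> is_derive g t dg ->
  is_derive (fun s => f (g s)) t (dg * df).
Proof. intros Hf Hg. apply (@is_derive_comp R_AbsRing R_NormedModule f g t df dg Hf Hg). Qed.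
Lemma D_sqrt (f : R -> R) (t df : R) : is_derive f t df -> 0 < f t ->
  is_derive (fun s => sqrt (f s)) t (df / (2 * sqrt (f t))).
Proof. intros; apply is_derive_sqrt; auto. Qed.
Lemma D_div (f g : R -> R) (t df dg : R) : is_derive f t df -> is_derive g t dg -> g t <> 0 ->
  is_derive (fun s => f s / g s) t ((df * g t - f t * dg) / g t ^ 2).
Proof. intros; apply is_derive_div; auto. Qed.
Lemma D_cos (t : R) : is_derive cos t (- sin t).
Proof. apply is_derive_Reals. apply derivable_pt_lim_cos. Qed.
Lemma D_sin (t : R) : is_derive sin t (cos t).
Proof. apply is_derive_Reals. apply derivable_pt_lim_sin. Qed.
Lemma D_ext (f g : R -> R) t l : (forall s, f s = g s) -> is_derive f t l -> is_derive g t l.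
Proof. intros; eapply is_derive_ext; eauto. Qed.

Definition rad (x y : R -> R) t := radius (x t, y t).
Definition Cm (x y : R -> R) t := x t * Derive y t - y t * Derive x t.
Definition Al (x y : R -> R) t := x t / rad x y t - Derive y t * Cm x y t.
Definition Be (x y : R -> R) t := y t / rad x y t + Derive x t * Cm x y t.

Lemma radius_sq p : radius p ^ 2 = fst p ^ 2 + snd p ^ 2.
Proof. unfold radius. rewrite pow2_sqrt; [reflexivity | nra]. Qed.
Lemma radius_nonneg p : 0 <= radius p.
Proof. unfold radius; apply sqrt_pos. Qed.
Lemma radius_pos p : p <> (0,0) -> 0 < radius p.
Proof.
  destruct p as [a b]; intros H. unfold radius; simpl. apply sqrt_lt_R0.
  destruct (Req_dec a 0); destruct (Req_dec b 0); subst; try (exfalso; apply H; reflexivity); nra.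
Qed.
Lemma noncoll_ne (x y : R -> R) t : ~ collision x y t -> (x t, y t) <> (0,0).
Proof. intros H E; apply H; injection E; intros; split; auto. Qed.
Lemma rad_pos (x y : R -> R) t : ~ collision x y t -> 0 < rad x y t.
Proof. intros H; apply radius_pos, noncoll_ne, H. Qed.
Lemma rad_sq (x y : R -> R) t : rad x y t ^ 2 = x t ^ 2 + y t ^ 2.
Proof. unfold rad; rewrite radius_sq; reflexivity. Qed.

Lemma is_derive_rad (x y : R -> R) (t dx dy : R) : is_derive x t dx -> is_derive y t dy -> ~ collision x y t ->
  is_derive (rad x y) t ((x t * dx + y t * dy) / rad x y t).
Proof.
  intros Hx Hy Hn.
  assert (Hp := rad_pos x y t Hn).
  assert (H2 := rad_sq x y t).
  assert (Hs := D_plus _ _ _ _ _ (D_mult _ _ _ _ _ Hx Hx) (D_mult _ _ _ _ _ Hy Hy)).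
  assert (Hq : 0 < x t * x t + y t * y t) by (simpl in H2; nra).
  assert (E : sqrt (x t * x t + y t * y t) = rad x y t).
  { unfold rad, radius; simpl; f_equal; ring. }
  assert (H3 := D_sqrt _ _ _ Hs Hq). cbv beta in H3. rewrite E in H3.
  eapply is_derive_eq. eapply D_ext. 2: exact H3.
  intros s. unfold rad, radius; simpl. f_equal; ring.
  match goal with |- ?a = ?b => change (@eq R a b) end. field. lra.
Qed.

Ltac req := match goal with |- ?a = ?b => change (@eq R a b) end.

Lemma nt_facts (x y : R -> R) t : newton_at x y t ->
  is_derive x t (Derive x t) /\ is_derive y t (Derive y t) /\
  is_derive (Derive x) t (- x t / rad x y t ^ 3) /\ is_derive (Derive y) t (- y t / rad x y t ^ 3).
Proof.
  intros [H1 [H2 [H3 H4]]]. split; [apply Derive_correct; exact H1|split; [apply Derive_correct; exact H2| split; assumption]].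
Qed.

Lemma dCm (x y : R -> R) t : ~ collision x y t -> newton_at x y t -> is_derive (Cm x y) t 0.
Proof.
  intros Hn Hnt. destruct (nt_facts x y t Hnt) as [Hx [Hy [Hx2 Hy2]]].
  assert (Hp := rad_pos x y t Hn).
  eapply is_derive_eq.
  apply (D_minus _ _ _ _ _ (D_mult _ _ _ _ _ Hx Hy2) (D_mult _ _ _ _ _ Hy Hx2)).
  req. field. lra.
Qed.

Lemma dux (x y : R -> R) t : ~ collision x y t -> newton_at x y t ->
  is_derive (fun s => x s / rad x y s) t (- y t * Cm x y t / rad x y t ^ 3).
Proof.
  intros Hn Hnt. destruct (nt_facts x y t Hnt) as [Hx [Hy [Hx2 Hy2]]].
  assert (Hp := rad_pos x y t Hn). assert (H2 := rad_sq x y t).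
  eapply is_derive_eq.
  apply (D_div _ _ _ _ _ Hx (is_derive_rad x y t _ _ Hx Hy Hn)). lra.
  unfold Cm. req. field_simplify; try lra. rewrite !H2. field. lra.
Qed.

Lemma duy (x y : R -> R) t : ~ collision x y t -> newton_at x y t ->
  is_derive (fun s => y s / rad x y s) t (x t * Cm x y t / rad x y t ^ 3).
Proof.
  intros Hn Hnt. destruct (nt_facts x y t Hnt) as [Hx [Hy [Hx2 Hy2]]].
  assert (Hp := rad_pos x y t Hn). assert (H2 := rad_sq x y t).
  eapply is_derive_eq.
  apply (D_div _ _ _ _ _ Hy (is_derive_rad x y t _ _ Hx Hy Hn)). lra.
  unfold Cm. req. field_simplify; try lra. rewrite !H2. field. lra.
Qed.

Lemma dAl (x y : R -> R) t : ~ collision x y t -> newton_at x y t -> is_derive (Al x y) t 0.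
Proof.
  intros Hn Hnt. destruct (nt_facts x y t Hnt) as [Hx [Hy [Hx2 Hy2]]].
  assert (Hp := rad_pos x y t Hn).
  eapply is_derive_eq.
  apply (D_minus _ _ _ _ _ (dux x y t Hn Hnt) (D_mult _ _ _ _ _ Hy2 (dCm x y t Hn Hnt))).
  req. field. lra.
Qed.

Lemma dBe (x y : R -> R) t : ~ collision x y t -> newton_at x y t -> is_derive (Be x y) t 0.
Proof.
  intros Hn Hnt. destruct (nt_facts x y t Hnt) as [Hx [Hy [Hx2 Hy2]]].
  assert (Hp := rad_pos x y t Hn).
  eapply is_derive_eq.
  apply (D_plus _ _ _ _ _ (duy x y t Hn Hnt) (D_mult _ _ _ _ _ Hx2 (dCm x y t Hn Hnt))).
  req. field. lra.
Qed.


Lemma conn_r (Z : R -> Prop) t0 :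
 (forall t, Z t -> exists d, 0<d /\ forall s, Rabs (s - t) < d -> Z s) ->
 (forall b, (forall eps, 0 < eps -> exists z, Z z /\ Rabs (z - b) < eps) -> Z b) ->
 Z t0 -> forall t, t0 <= t -> Z t.
Proof.
  intros Hop Hcl H0 t Ht.
  set (E := fun s => t0 <= s <= t /\ forall w, t0 <= w <= s -> Z w).
  assert (Hb : bound E). { exists t. intros s [[_ Hs] _]; exact Hs. }
  assert (He : exists s, E s). { exists t0. split. lra. intros w Hw. replace w with t0 by lra; auto. }
  destruct (completeness E Hb He) as [b [Hub Hlub]].
  assert (Hb0 : t0 <= b). { apply Hub. split. lra. intros w Hw. replace w with t0 by lra; auto. }
  assert (Hbt : b <= t). { apply Hlub. intros s [[_ Hs] _]; exact Hs. }
  assert (Key : forall w, t0 <= w < b -> Z w).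
  { intros w Hw. destruct (classic (exists s, E s /\ w < s)) as [[s [[_ Hs] Hws]]|Hn].
    - apply Hs; lra.
    - exfalso. assert (b <= w); [|lra]. apply Hlub. intros s Es.
      destruct (Rle_or_lt s w); auto. exfalso; apply Hn; exists s; auto. }
  assert (Zb : Z b).
  { apply Hcl. intros eps Heps. destruct (Req_dec b t0) as [->|Hne].
    - exists t0; split; auto. rewrite Rminus_diag, Rabs_R0; auto.
    - exists (Rmax t0 (b - eps/2)). split.
      + apply Key. split. apply Rmax_l. apply Rmax_lub_lt; lra.
      + unfold Rmax; destruct (Rle_dec t0 (b - eps/2)); apply Rabs_def1; lra. }
  destruct (Rle_or_lt t b) as [Htb|Hlt].
  - replace t with b by lra; exact Zb.
  - exfalso. destruct (Hop b Zb) as [d [Hd Hd']].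
    assert (E (Rmin t (b + d/2))).
    { split. split. apply Rmin_glb; lra. apply Rmin_l.
      intros w [Hw1 Hw2]. destruct (Rlt_or_le w b).
      - apply Key; lra.
      - apply Hd'. assert (w <= b + d/2) by (generalize (Rmin_r t (b + d/2)); lra).
        apply Rabs_def1; lra. }
    assert (HH : Rmin t (b + d/2) <= b) by (apply Hub; auto).
    unfold Rmin in HH; destruct (Rle_dec t (b + d/2)); lra.
Qed.

Lemma conn (Z : R -> Prop) t0 :
 (forall t, Z t -> exists d, 0<d /\ forall s, Rabs (s - t) < d -> Z s) ->
 (forall b, (forall eps, 0 < eps -> exists z, Z z /\ Rabs (z - b) < eps) -> Z b) ->
 Z t0 -> forall t, Z t.
Proof.
  intros Hop Hcl H0 t. destruct (Rle_or_lt t0 t).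
  - eapply conn_r; eauto.
  - replace t with (- - t) by ring.
    apply (conn_r (fun s => Z (- s)) (- t0)); [ | | rewrite Ropp_involutive; auto | lra].
    + intros s Hs. destruct (Hop _ Hs) as [d [Hd Hd']]. exists d; split; auto.
      intros w Hw. apply Hd'. replace (- w - - s) with (- (w - s)) by ring. rewrite Rabs_Ropp; auto.
    + intros b Hb. apply Hcl. intros eps Heps. destruct (Hb eps Heps) as [z [Hz Hz']].
      exists (- z). split; auto. replace (- z - - b) with (- (z - b)) by ring. rewrite Rabs_Ropp; auto.
Qed.



Lemma noncoll_nbhd (x y : R -> R) b : continuous x b -> continuous y b -> ~ collision x y b ->
  exists d, 0 < d /\ forall s, Rabs (s - b) < d -> ~ collision x y s.
Proof.
  intros Hx Hy Hn. destruct (Req_dec (x b) 0) as [Hx0|Hx0].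
  - assert (Hy0 : y b <> 0) by (intro; apply Hn; split; auto).
    destruct (cont_eps y b Hy (Rabs (y b)) (Rabs_pos_lt _ Hy0)) as [d [Hd Hd']].
    exists d; split; auto. intros s Hs [_ Hc]. specialize (Hd' s Hs). rewrite Hc in Hd'.
    rewrite Rminus_0_l, Rabs_Ropp in Hd'. lra.
  - destruct (cont_eps x b Hx (Rabs (x b)) (Rabs_pos_lt _ Hx0)) as [d [Hd Hd']].
    exists d; split; auto. intros s Hs [Hc _]. specialize (Hd' s Hs). rewrite Hc in Hd'.
    rewrite Rminus_0_l, Rabs_Ropp in Hd'. lra.
Qed.

Lemma collision_line (x y : R -> R) : extended_solution x y -> forall t0, collision x y t0 ->
  exists u1 u2, (u1, u2) <> (0,0) /\ forall t, x t * u2 - y t * u1 = 0.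
Proof.
  intros [Hcont [Hnewt Hcoll]] t0 H0.
  destruct (Hcoll t0 H0) as [_ [u1 [u2 [eps [Hu [Heps [Hray _]]]]]]].
  exists u1, u2; split; auto.
  set (Z := fun t => exists d, 0 < d /\ forall s, Rabs (s - t) < d -> x s * u2 - y s * u1 = 0).
  assert (HZ : forall t, Z t).
  { apply (conn Z t0).
    - intros t [d [Hd Hd']]. exists (d/2); split; [lra|]. intros s Hs.
      exists (d/2); split; [lra|]. intros w Hw. apply Hd'.
      apply Rle_lt_trans with (Rabs (w - s) + Rabs (s - t)); [|lra].
      replace (w - t) with ((w - s) + (s - t)) by ring. apply Rabs_triang.
    - intros b Hb. destruct (classic (collision x y b)) as [Hcb|Hnb].
      + destruct (Hcoll b Hcb) as [[ed [Hed Hdisc]] [w1 [w2 [eb [Hw [Heb [Hrayb _]]]]]]].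
        set (ep := Rmin eb ed).
        assert (Hep : 0 < ep) by (apply Rmin_glb_lt; auto).
        destruct (Hb (ep/2)) as [z [[dz [Hdz Hdz']] Hzb]]; [lra|].
        assert (Hs : exists s, 0 < Rabs (s - b) < ep /\ Rabs (s - z) < dz).
        { destruct (Req_dec z b) as [->|Hne].
          - exists (b + Rmin dz ep / 2).
            assert (0 < Rmin dz ep) by (apply Rmin_glb_lt; auto).
            assert (Rmin dz ep <= dz) by apply Rmin_l. assert (Rmin dz ep <= ep) by apply Rmin_r.
            replace (b + Rmin dz ep / 2 - b) with (Rmin dz ep / 2) by ring.
            rewrite Rabs_right by lra. lra.
          - exists z. split. split. apply Rabs_pos_lt; lra. lra. rewrite Rminus_diag, Rabs_R0; auto. }
        destruct Hs as [s [[Hs1 Hs2] Hs3]].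
        assert (ep <= eb) by apply Rmin_l. assert (ep <= ed) by apply Rmin_r.
        destruct (Hrayb s ltac:(lra)) as [sig [Hsig [Ex Ey]]].
        assert (Hns : ~ collision x y s) by (apply Hdisc; lra).
        assert (Hf := Hdz' s Hs3). rewrite Ex, Ey in Hf.
        assert (Hsig0 : sig <> 0) by (intro; subst; apply Hns; split; [rewrite Ex|rewrite Ey]; ring).
        assert (Hw0 : w1 * u2 - w2 * u1 = 0).
        { apply (Rmult_eq_reg_l sig); auto. rewrite Rmult_0_r. rewrite <- Hf. ring. }
        exists eb; split; auto. intros s' Hs'. destruct (Hrayb s' Hs') as [sg [_ [E1 E2]]].
        rewrite E1, E2. replace (sg * w1 * u2 - sg * w2 * u1) with (sg * (w1 * u2 - w2 * u1)) by ring.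
        rewrite Hw0; ring.
      + destruct (Hcont b) as [Hcx Hcy].
        destruct (noncoll_nbhd x y b Hcx Hcy Hnb) as [d [Hd Hd']].
        destruct (Hb (d/2)) as [z [[dz [Hdz Hdz']] Hzb]]; [lra|].
        assert (Hnz : ~ collision x y z) by (apply Hd'; lra).
        destruct (nt_facts x y z (Hnewt z Hnz)) as [Dx [Dy _]].
        assert (Hfz : x z * u2 - y z * u1 = 0) by (apply Hdz'; rewrite Rminus_diag, Rabs_R0; auto).
        assert (Hd1 : Derive x z * u2 - Derive y z * u1 = 0).
        { assert (H1 := D_minus _ _ _ _ _ (is_derive_scal _ _ u2 _ Dx) (is_derive_scal _ _ u1 _ Dy)).
          assert (H2 : is_derive (fun s => u2 * x s - u1 * y s) z 0).
          { apply (is_derive_ext_loc (fun _ => 0)). apply (loc_of _ z dz Hdz).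
            intros s Hs. specialize (Hdz' s Hs). req. lra. apply D_const. }
          apply is_derive_unique in H1. apply is_derive_unique in H2. rewrite H2 in H1.
          rewrite (Rmult_comm (Derive x z)), (Rmult_comm (Derive y z)). rewrite H1. reflexivity. }
        assert (HC : Cm x y z = 0).
        { unfold Cm. destruct (Req_dec u1 0) as [E1|E1].
          - assert (u2 <> 0) by (intro; apply Hu; subst; reflexivity). subst u1.
            assert (x z = 0) by (apply (Rmult_eq_reg_r u2); auto; lra).
            assert (Derive x z = 0) by (apply (Rmult_eq_reg_r u2); auto; lra).
            rewrite H1, H2; ring.
          - apply (Rmult_eq_reg_l u1); auto. rewrite Rmult_0_r.
            replace (u1 * (x z * Derive y z - y z * Derive x z))
              with (x z * (Derive y z * u1) - (y z * u1) * Derive x z) by ring.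
            replace (Derive y z * u1) with (Derive x z * u2) by lra.
            replace (y z * u1) with (x z * u2) by lra. ring. }
        assert (Hin : forall s, b - d < s < b + d -> ~ collision x y s).
        { intros s Hs. apply Hd'. apply Rabs_def1; lra. }
        assert (Hzin : b - d < z < b + d) by (apply Rabs_def2 in Hzb; lra).
        exists d; split; auto. intros s Hs.
        assert (Hsin : b - d < s < b + d) by (apply Rabs_def2 in Hs; lra).
        assert (EC : Cm x y s = Cm x y z).
        { apply (const_on (Cm x y) (b - d) (b + d)); auto. intros w Hw. apply dCm; auto. }
        assert (EA : Al x y s = Al x y z).
        { apply (const_on (Al x y) (b - d) (b + d)); auto. intros w Hw. apply dAl; auto. }
        assert (EB : Be x y s = Be x y z).
        { apply (const_on (Be x y) (b - d) (b + d)); auto. intros w Hw. apply dBe; auto. }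
        unfold Al, Be in EA, EB. rewrite EC, HC in EA, EB. rewrite !Rmult_0_r, !Rminus_0_r in EA.
        rewrite !Rmult_0_r, !Rplus_0_r in EB.
        assert (Hrs := rad_pos x y s (Hin s Hsin)). assert (Hrz := rad_pos x y z Hnz).
        assert (Exs : x s = rad x y s * (x z / rad x y z)) by (rewrite <- EA; field; lra).
        assert (Eys : y s = rad x y s * (y z / rad x y z)) by (rewrite <- EB; field; lra).
        rewrite Exs, Eys. replace (rad x y s * (x z / rad x y z) * u2 - rad x y s * (y z / rad x y z) * u1)
          with (rad x y s / rad x y z * (x z * u2 - y z * u1)) by (field; lra).
        rewrite Hfz; ring.
    - exists eps; split; auto. intros s Hs. destruct (Hray s Hs) as [sg [_ [E1 E2]]].
      rewrite E1, E2; ring. }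
  intros t. destruct (HZ t) as [d [Hd Hd']]. apply Hd'. rewrite Rminus_diag, Rabs_R0; auto.
Qed.


Definition hh (e s : R) := 1 - e * cos s.
Definition ph0 (e : R) := acos (/ e).
Definition In (e s : R) := e < 1 \/ (ph0 e < s < 2 * PI - ph0 e).

Lemma cos_2PI_minus s : cos (2 * PI - s) = cos s.
Proof. rewrite cos_minus, cos_2PI, sin_2PI; ring. Qed.
Lemma sin_2PI_minus s : sin (2 * PI - s) = - sin s.
Proof. rewrite sin_minus, cos_2PI, sin_2PI; ring. Qed.

Lemma ph0_facts e : 1 <= e -> 0 <= ph0 e < PI /\ cos (ph0 e) = / e.
Proof.
  intros He. unfold ph0.
  assert (H1 : 0 < / e <= 1). { split. apply Rinv_0_lt_compat; lra.
    rewrite <- Rinv_1. apply Rinv_le_contravar; lra. }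
  assert (Hc : cos (acos (/ e)) = / e) by (apply cos_acos; lra).
  destruct (acos_bound (/ e)) as [Ha Hb].
  split; [split; auto|auto].
  destruct Hb as [Hb| Hb]; auto. exfalso. rewrite Hb, cos_PI in Hc. lra.
Qed.

Lemma In_h e s : 0 <= e -> In e s -> 0 < hh e s.
Proof.
  intros He HI; unfold hh. destruct (Rlt_or_le e 1) as [H|Hee].
  - assert (Hc := COS_bound s). destruct Hc. nra.
  - destruct HI as [HI|[H1 H2]]; [lra|].
    destruct (ph0_facts e Hee) as [[Hp0 Hp1] Hc].
    assert (cos s < / e).
    { rewrite <- Hc. destruct (Rle_or_lt s PI).
      - apply cos_decreasing_1; lra.
      - rewrite <- cos_2PI_minus. apply cos_decreasing_1; lra. }
    assert (e * cos s < e * / e) by (apply Rmult_lt_compat_l; lra).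
    rewrite Rinv_r in H0; lra.
Qed.

Lemma h_In e s : 0 <= e -> 0 <= s < 2 * PI -> 0 < hh e s -> In e s.
Proof.
  intros He Hs Hh. destruct (Rlt_or_le e 1) as [Hl|Hee]; [left; auto|right].
  destruct (ph0_facts e Hee) as [[Hp0 Hp1] Hc]. unfold hh in Hh.
  assert (Hce : cos s < / e).
  { apply (Rmult_lt_reg_l e); [lra|]. rewrite Rinv_r; lra. }
  split.
  - apply Rnot_le_lt; intro Hle. assert (cos (ph0 e) <= cos s); [|lra].
    destruct Hle as [Hlt|Heq]; [apply Rlt_le, cos_decreasing_1; lra| rewrite Heq; lra].
  - apply Rnot_le_lt; intro Hle. rewrite <- cos_2PI_minus in Hce.
    assert (cos (ph0 e) <= cos (2 * PI - s)); [|lra].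
    destruct Hle as [Hlt|Heq]; [apply Rlt_le, cos_decreasing_1; lra| replace (2 * PI - s) with (ph0 e) by lra; lra].
Qed.

Lemma In_conv e a b c : In e a -> In e b -> a <= c <= b -> In e c.
Proof. intros [H|H] [H'|H'] Hc; unfold In; try (left; assumption); right; lra. Qed.

Lemma In_PI e : 0 <= e -> In e PI.
Proof.
  intros He. destruct (Rlt_or_le e 1); [left; auto|right].
  destruct (ph0_facts e H) as [[Hp0 Hp1] _]. lra.
Qed.

Lemma In_open e s : In e s -> exists d, 0 < d /\ forall b, Rabs (b - s) < d -> In e b.
Proof.
  intros [H|[H1 H2]].
  - exists 1; split; [lra|]. intros; left; auto.
  - exists (Rmin (s - ph0 e) (2 * PI - ph0 e - s)). split. apply Rmin_glb_lt; lra.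
    intros b Hb. apply Rabs_def2 in Hb. destruct Hb as [Hb1 Hb2].
    generalize (Rmin_l (s - ph0 e) (2 * PI - ph0 e - s)) (Rmin_r (s - ph0 e) (2 * PI - ph0 e - s)).
    intros; right; lra.
Qed.

Lemma In_bound e a b : 0 <= e -> In e a ->
  (forall c, Rmin a b <= c <= Rmax a b -> 0 < hh e c) -> In e b.
Proof.
  intros He Ha Hc. destruct (Rlt_or_le e 1) as [Hl|Hee]; [left; auto|].
  destruct Ha as [Ha|[Ha1 Ha2]]; [lra|].
  destruct (ph0_facts e Hee) as [[Hp0 Hp1] Hcos].
  assert (Hz1 : hh e (ph0 e) = 0) by (unfold hh; rewrite Hcos; field; lra).
  assert (Hz2 : hh e (2 * PI - ph0 e) = 0) by (unfold hh; rewrite cos_2PI_minus, Hcos; field; lra).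
  right. split.
  - apply Rnot_le_lt; intro Hle. assert (Hp := Hc (ph0 e)).
    rewrite Hz1 in Hp. apply (Rlt_irrefl 0), Hp. split.
    apply Rle_trans with b; [apply Rmin_r|auto]. apply Rle_trans with a; [lra|apply Rmax_l].
  - apply Rnot_le_lt; intro Hle. assert (Hp := Hc (2 * PI - ph0 e)).
    rewrite Hz2 in Hp. apply (Rlt_irrefl 0), Hp. split.
    apply Rle_trans with a; [apply Rmin_l|lra]. apply Rle_trans with b; [auto|apply Rmax_r].
Qed.

Lemma ang c s : c ^ 2 + s ^ 2 = 1 -> exists p, 0 <= p < 2 * PI /\ cos p = c /\ sin p = s.
Proof.
  intros H. assert (Hc : -1 <= c <= 1) by (split; nra).
  assert (Hs2 : sqrt (1 - c²) = Rabs s).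
  { rewrite <- sqrt_Rsqr_abs. f_equal. unfold Rsqr. lra. }
  destruct (acos_bound c) as [Ha1 Ha2].
  destruct (Rle_or_lt 0 s) as [Hs|Hs].
  - exists (acos c). split. split; [auto| generalize PI_RGT_0; lra].
    split. apply cos_acos; auto. rewrite sin_acos, Hs2, Rabs_right; lra.
  - assert (Hc' : -1 < c < 1) by (split; nra).
    destruct (acos_bound_lt c Hc') as [Hb1 Hb2].
    exists (2 * PI - acos c). split. lra.
    rewrite cos_2PI_minus, sin_2PI_minus, cos_acos, sin_acos, Hs2, Rabs_left; auto. split; [auto|ring].
Qed.


Lemma mvt_ge (F dF : R -> R) a b : a <= b -> (forall s, a <= s <= b -> is_derive F s (dF s)) ->
  (forall s, a <= s <= b -> 0 <= dF s) -> F a <= F b.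
Proof.
  intros Hab HD Hp. destruct (MVT_gen F a b dF) as [c [Hc Hc']].
  - intros z Hz. apply HD. rewrite Rmin_left, Rmax_right in Hz; lra.
  - intros z Hz. apply derive_cont with (dF z). apply HD. rewrite Rmin_left, Rmax_right in Hz; lra.
  - rewrite Rmin_left, Rmax_right in Hc by lra. assert (0 <= dF c) by (apply Hp; lra). nra.
Qed.

Definition ff (e s : R) := / (hh e s * hh e s).
Definition T (e p : R) := RInt (ff e) PI p.

Lemma dhh e s : is_derive (hh e) s (e * sin s).
Proof.
  unfold hh. eapply is_derive_eq. apply D_minus. apply D_const. apply is_derive_scal. apply D_cos.
  req; ring.
Qed.

Lemma dff e s : hh e s <> 0 -> is_derive (ff e) s (- (e * sin s * hh e s + hh e s * (e * sin s)) / (hh e s * hh e s) ^ 2).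
Proof.
  intros H. unfold ff. apply (is_derive_inv (fun y => hh e y * hh e y)). apply (D_mult (hh e) (hh e)); apply dhh. apply Rmult_integral_contrapositive; auto.
Qed.

Lemma ff_cont e s : hh e s <> 0 -> continuous (ff e) s.
Proof.
  intros H. apply (@ex_derive_continuous R_AbsRing R_NormedModule). eexists. apply dff; auto.
Qed.

Lemma ff_pos e s : hh e s <> 0 -> 0 < ff e s.
Proof. intros H. unfold ff. apply Rinv_0_lt_compat. assert (0 < hh e s * hh e s) by nra. lra. Qed.

Lemma ex_RInt_ff e a b : 0 <= e -> In e a -> In e b -> ex_RInt (ff e) a b.
Proof.
  intros He Ha Hb. apply (@ex_RInt_continuous R_CompleteNormedModule). intros z Hz. apply ff_cont.
  assert (In e z).
  { destruct (Rle_or_lt a b).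
    - rewrite Rmin_left, Rmax_right in Hz by lra. apply (In_conv e a b); auto.
    - rewrite Rmin_right, Rmax_left in Hz by lra. apply (In_conv e b a); auto. }
  apply In_h in H; auto. lra.
Qed.

Lemma T_der e p : 0 <= e -> In e p -> is_derive (T e) p (ff e p).
Proof.
  intros He Hp. apply is_derive_RInt with PI.
  - destruct (In_open e p Hp) as [d [Hd Hd']]. apply (loc_of _ p d Hd). intros b Hb.
    apply (@RInt_correct R_CompleteNormedModule). apply ex_RInt_ff; auto. apply In_PI; auto.
  - apply ff_cont. apply In_h in Hp; auto. lra.
Qed.

Lemma T_cont e p : 0 <= e -> In e p -> continuity_pt (T e) p.
Proof. intros; eapply derive_cont; apply T_der; auto. Qed.

Lemma T_incr e a b : 0 <= e -> In e a -> In e b -> a < b -> T e a < T e b.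
Proof.
  intros He Ha Hb Hab. destruct (MVT_gen (T e) a b (ff e)) as [c [Hc Hc']].
  - intros z Hz. rewrite Rmin_left, Rmax_right in Hz by lra. apply T_der; auto. apply (In_conv e a b); auto; lra.
  - intros z Hz. rewrite Rmin_left, Rmax_right in Hz by lra. apply T_cont; auto. apply (In_conv e a b); auto.
  - rewrite Rmin_left, Rmax_right in Hc by lra.
    assert (Hi : In e c) by (apply (In_conv e a b); auto).
    assert (0 < ff e c) by (apply ff_pos; apply In_h in Hi; auto; lra). nra.
Qed.

Lemma T_le e a b : 0 <= e -> In e a -> In e b -> a <= b -> T e a <= T e b.
Proof. intros He Ha Hb [H|H]. apply Rlt_le, T_incr; auto. subst; lra. Qed.

Lemma T_inj e a b : 0 <= e -> In e a -> In e b -> T e a = T e b -> a = b.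
Proof.
  intros He Ha Hb H. destruct (Rtotal_order a b) as [h|[h|h]]; auto.
  apply (T_incr e) in h; auto; lra. apply (T_incr e) in h; auto; lra.
Qed.

Lemma T_PI e : T e PI = 0.
Proof. unfold T. rewrite RInt_point. reflexivity. Qed.


Lemma ivt (f : R -> R) a b y : a <= b -> (forall s, a <= s <= b -> continuity_pt f s) ->
  f a <= y <= f b -> exists s, a <= s <= b /\ f s = y.
Proof.
  intros [Hab|Hab] Hc Hy.
  - destruct (f_interv_is_interv f a b y Hab Hy Hc) as [s Hs]. exists s; auto.
  - subst. exists b; split; [lra|]. lra.
Qed.

Lemma hh_le_M e s : 1 <= e -> PI <= s <= 2 * PI - ph0 e -> hh e s <= e * (2 * PI - ph0 e - s).
Proof.
  intros He Hs. destruct (ph0_facts e He) as [[Hp0 Hp1] Hc].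
  set (M := 2 * PI - ph0 e). assert (HMd : M = 2 * PI - ph0 e) by reflexivity.
  assert (HM : hh e M = 0) by (unfold hh, M; rewrite cos_2PI_minus, Hc; field; lra).
  assert (Hmv := mvt_ge (fun z => hh e z - e * (M - z)) (fun z => e * sin z + e) s M ltac:(lra)).
  cbv beta in Hmv. rewrite HM in Hmv.
  assert (hh e s - e * (M - s) <= 0); [|lra].
  replace 0 with (0 - e * (M - M)) by ring. apply Hmv.
  - intros z _. eapply is_derive_eq. apply D_minus. apply dhh. apply is_derive_scal.
    apply D_minus. apply D_const. apply D_id. req; ring.
  - intros z _. generalize (SIN_bound z); nra.
Qed.

Lemma hh_le_m e s : 1 <= e -> ph0 e <= s <= PI -> hh e s <= e * (s - ph0 e).
Proof.
  intros He Hs. destruct (ph0_facts e He) as [[Hp0 Hp1] Hc].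
  set (m := ph0 e). assert (Hmd : m = ph0 e) by reflexivity.
  assert (Hm : hh e m = 0) by (unfold hh, m; rewrite Hc; field; lra).
  assert (Hmv := mvt_ge (fun z => e * (z - m) - hh e z) (fun z => e - e * sin z) m s ltac:(lra)).
  cbv beta in Hmv. rewrite Hm in Hmv.
  assert (0 <= e * (s - m) - hh e s); [|lra].
  replace 0 with (e * (m - m) - 0) by ring. apply Hmv.
  - intros z _. eapply is_derive_eq. apply D_minus. apply is_derive_scal.
    apply D_minus. apply D_id. apply D_const. apply dhh. req; ring.
  - intros z _. generalize (SIN_bound z); nra.
Qed.

Lemma inv_sq_le a b : 0 < a -> a <= b -> / (b * b) <= / (a * a).
Proof. intros. apply Rinv_le_contravar; nra. Qed.

Lemma T_up e : 0 <= e -> forall tau, exists p, In e p /\ PI <= p /\ tau <= T e p.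
Proof.
  intros He tau. destruct (Rlt_or_le e 1) as [Hl|Hge].
  - set (k := / ((1 + e) * (1 + e))).
    assert (Hk : 0 < k) by (apply Rinv_0_lt_compat; nra).
    exists (PI + Rabs tau / k + 1). split; [left; auto|].
    assert (0 <= Rabs tau / k) by (apply Rdiv_le_0_compat; [apply Rabs_pos|auto]).
    split; [lra|].
    assert (Hmv := mvt_ge (fun z => T e z - k * z) (fun z => ff e z - k) PI (PI + Rabs tau / k + 1) ltac:(lra)).
    cbv beta in Hmv. rewrite T_PI in Hmv.
    assert (HH : 0 - k * PI <= T e (PI + Rabs tau / k + 1) - k * (PI + Rabs tau / k + 1)).
    { apply Hmv.
      - intros z _. apply D_minus. apply T_der; auto. left; auto.
        eapply is_derive_eq. apply is_derive_scal. apply D_id. req; ring.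
      - intros z _. assert (Hz : 0 < hh e z) by (apply In_h; auto; left; auto).
        assert (hh e z <= 1 + e) by (unfold hh; generalize (COS_bound z); nra).
        unfold ff, k. generalize (inv_sq_le _ _ Hz H0). lra. }
    replace (k * (PI + Rabs tau / k + 1)) with (k * PI + Rabs tau + k) in HH by (field; lra).
    generalize (Rle_abs tau). lra.
  - destruct (ph0_facts e Hge) as [[Hp0 Hp1] Hc].
    set (M := 2 * PI - ph0 e). set (L := M - PI).
    assert (HMd : M = 2 * PI - ph0 e) by reflexivity. assert (HLd : L = M - PI) by reflexivity.
    assert (HL : 0 < L) by lra.
    set (w := / (e * e * Rabs tau + / L)).
    assert (Hden : 0 < e * e * Rabs tau + / L).
    { assert (0 < / L) by (apply Rinv_0_lt_compat; auto). generalize (Rabs_pos tau). nra. }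
    assert (Hw : 0 < w) by (apply Rinv_0_lt_compat; auto).
    assert (HwL : w <= L).
    { unfold w. rewrite <- (Rinv_inv L) at 2. apply Rinv_le_contravar. apply Rinv_0_lt_compat; auto.
      generalize (Rabs_pos tau). nra. }
    exists (M - w). split; [right; lra|]. split; [lra|].
    set (G := fun z => / (e * e * (M - z))).
    assert (Hmv := mvt_ge (fun z => T e z - G z) (fun z => ff e z - / (e * e * ((M - z) * (M - z)))) PI (M - w) ltac:(lra)).
    cbv beta in Hmv. rewrite T_PI in Hmv.
    assert (HH : 0 - G PI <= T e (M - w) - G (M - w)).
    { apply Hmv.
      - intros z Hz. apply D_minus. apply T_der; auto. right; lra.
        unfold G. eapply is_derive_eq. apply (is_derive_inv (fun z => e * e * (M - z))).
        eapply is_derive_eq. apply is_derive_scal. apply D_minus. apply D_const. apply D_id. reflexivity.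
        assert (0 < M - z) by (lra). apply Rgt_not_eq. apply Rmult_lt_0_compat; nra.
        req. field. split; [|lra]. lra.
      - intros z Hz. assert (Hz' : 0 < hh e z) by (apply In_h; auto; right; lra).
        assert (H1 : hh e z <= e * (M - z)) by (apply hh_le_M; auto; lra).
        assert (0 < M - z) by (lra).
        generalize (inv_sq_le _ _ Hz' H1).
        replace (e * (M - z) * (e * (M - z))) with (e * e * ((M - z) * (M - z))) by ring.
        unfold ff. lra. }
    unfold G in HH. replace (M - (M - w)) with w in HH by ring.
    assert (E1 : / (e * e * w) = Rabs tau + / (e * e * L)).
    { unfold w. rewrite Rinv_mult, Rinv_inv. field. split; lra. }
    replace (M - PI) with L in HH by reflexivity. rewrite E1 in HH.
    generalize (Rle_abs tau). lra.
Qed.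

Lemma T_down e : 0 <= e -> forall tau, exists p, In e p /\ p <= PI /\ T e p <= tau.
Proof.
  intros He tau. destruct (Rlt_or_le e 1) as [Hl|Hge].
  - set (k := / ((1 + e) * (1 + e))).
    assert (Hk : 0 < k) by (apply Rinv_0_lt_compat; nra).
    exists (PI - Rabs tau / k - 1). split; [left; auto|].
    assert (0 <= Rabs tau / k) by (apply Rdiv_le_0_compat; [apply Rabs_pos|auto]).
    split; [lra|].
    assert (Hmv := mvt_ge (fun z => T e z - k * z) (fun z => ff e z - k) (PI - Rabs tau / k - 1) PI ltac:(lra)).
    cbv beta in Hmv. rewrite T_PI in Hmv.
    assert (HH : T e (PI - Rabs tau / k - 1) - k * (PI - Rabs tau / k - 1) <= 0 - k * PI).
    { apply Hmv.
      - intros z _. apply D_minus. apply T_der; auto. left; auto.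
        eapply is_derive_eq. apply is_derive_scal. apply D_id. req; ring.
      - intros z _. assert (Hz : 0 < hh e z) by (apply In_h; auto; left; auto).
        assert (H0 : hh e z <= 1 + e) by (unfold hh; generalize (COS_bound z); nra).
        unfold ff, k. generalize (inv_sq_le _ _ Hz H0). lra. }
    replace (k * (PI - Rabs tau / k - 1)) with (k * PI - Rabs tau - k) in HH by (field; lra).
    generalize (Rle_abs (- tau)). rewrite Rabs_Ropp. lra.
  - destruct (ph0_facts e Hge) as [[Hp0 Hp1] Hc].
    set (m := ph0 e). set (L := PI - m).
    assert (Hmd : m = ph0 e) by reflexivity. assert (HLd : L = PI - m) by reflexivity.
    assert (HL : 0 < L) by lra.
    set (w := / (e * e * Rabs tau + / L)).
    assert (Hden : 0 < e * e * Rabs tau + / L).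
    { assert (0 < / L) by (apply Rinv_0_lt_compat; auto). generalize (Rabs_pos tau). nra. }
    assert (Hw : 0 < w) by (apply Rinv_0_lt_compat; auto).
    assert (HwL : w <= L).
    { unfold w. rewrite <- (Rinv_inv L) at 2. apply Rinv_le_contravar. apply Rinv_0_lt_compat; auto.
      generalize (Rabs_pos tau). nra. }
    exists (m + w). split; [right; lra|]. split; [lra|].
    set (G := fun z => - / (e * e * (z - m))).
    assert (Hmv := mvt_ge (fun z => T e z - G z) (fun z => ff e z - / (e * e * ((z - m) * (z - m)))) (m + w) PI ltac:(lra)).
    cbv beta in Hmv. rewrite T_PI in Hmv.
    assert (HH : T e (m + w) - G (m + w) <= 0 - G PI).
    { apply Hmv.
      - intros z Hz. apply D_minus. apply T_der; auto. right; lra.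
        unfold G. eapply is_derive_eq. apply (is_derive_opp (fun z => / (e * e * (z - m)))).
        apply (is_derive_inv (fun z => e * e * (z - m))).
        eapply is_derive_eq. apply is_derive_scal. apply D_minus. apply D_id. apply D_const. reflexivity.
        assert (0 < z - m) by lra. apply Rgt_not_eq. apply Rmult_lt_0_compat; nra.
        unfold opp; simpl. req. field. split; [|lra]. lra.
      - intros z Hz. assert (Hz' : 0 < hh e z) by (apply In_h; auto; right; lra).
        assert (H1 : hh e z <= e * (z - m)) by (apply hh_le_m; auto; lra).
        assert (0 < z - m) by lra.
        generalize (inv_sq_le _ _ Hz' H1).
        replace (e * (z - m) * (e * (z - m))) with (e * e * ((z - m) * (z - m))) by ring.
        unfold ff. lra. }
    unfold G in HH. replace (m + w - m) with w in HH by ring.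
    assert (E1 : / (e * e * w) = Rabs tau + / (e * e * L)).
    { unfold w. rewrite Rinv_mult, Rinv_inv. field. split; lra. }
    replace (PI - m) with L in HH by reflexivity. rewrite E1 in HH.
    generalize (Rle_abs (- tau)). rewrite Rabs_Ropp. lra.
Qed.

Lemma T_surj e : 0 <= e -> forall tau, exists p, In e p /\ T e p = tau.
Proof.
  intros He tau. destruct (T_up e He tau) as [p1 [I1 [P1 H1]]].
  destruct (T_down e He tau) as [p2 [I2 [P2 H2]]].
  destruct (ivt (T e) p2 p1 tau) as [p [Hp Hp']]; [lra| |lra|].
  - intros s Hs. apply T_cont; auto. apply (In_conv e p2 p1); auto.
  - exists p; split; auto. apply (In_conv e p2 p1); auto.
Qed.


Lemma cont_of_eps (f : R -> R) t :
  (forall eps, 0 < eps -> exists d, 0 < d /\ forall s, Rabs (s - t) < d -> Rabs (f s - f t) < eps) ->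
  continuity_pt f t.
Proof.
  intros H. unfold continuity_pt, continue_in, limit1_in, limit_in. simpl. unfold R_dist.
  intros eps Heps. destruct (H eps Heps) as [d [Hd Hd']]. exists d; split; auto.
  intros s [_ Hs]. apply Hd'; auto.
Qed.

Lemma inverse_T e : 0 <= e -> exists S : R -> R,
  (forall tau, In e (S tau) /\ T e (S tau) = tau) /\
  (forall tau, is_derive S tau (hh e (S tau) * hh e (S tau))).
Proof.
  intros He.
  set (S := fun tau => proj1_sig (constructive_indefinite_description _ (T_surj e He tau))).
  assert (HS : forall tau, In e (S tau) /\ T e (S tau) = tau).
  { intros tau. unfold S. destruct (constructive_indefinite_description _ _) as [p Hp]. exact Hp. }
  clearbody S. exists S. split; auto.
  assert (Hmono : forall a b, a <= b -> S a <= S b).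
  { intros a b Hab. destruct (Rle_or_lt (S a) (S b)) as [h|h]; auto.
    destruct (HS a) as [Ia Ta]. destruct (HS b) as [Ib Tb].
    apply (T_incr e) in h; auto. lra. }
  assert (Hcont : forall tau, continuity_pt S tau).
  { intros tau. apply cont_of_eps. intros eps Heps.
    destruct (HS tau) as [It Tt].
    destruct (In_open e (S tau) It) as [d0 [Hd0 Hd0']].
    set (ep := Rmin eps d0 / 2).
    assert (Hep : 0 < ep) by (unfold ep; assert (0 < Rmin eps d0) by (apply Rmin_glb_lt; auto); lra).
    assert (Hep2 : ep < eps /\ ep < d0).
    { unfold ep; generalize (Rmin_l eps d0) (Rmin_r eps d0); intros; lra. }
    clearbody ep. destruct Hep2 as [Hep2 Hep3].
    assert (Im : In e (S tau - ep)) by (apply Hd0'; rewrite Rabs_left; lra).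
    assert (Ip : In e (S tau + ep)) by (apply Hd0'; rewrite Rabs_right; lra).
    assert (Tm : T e (S tau - ep) < tau) by (apply Rlt_le_trans with (T e (S tau)); [apply T_incr; auto; lra | lra]).
    assert (Tp : tau < T e (S tau + ep)) by (apply Rle_lt_trans with (T e (S tau)); [lra | apply T_incr; auto; lra]).
    exists (Rmin (tau - T e (S tau - ep)) (T e (S tau + ep) - tau)). split.
    apply Rmin_glb_lt; lra.
    intros s Hs. apply Rabs_def2 in Hs. destruct Hs as [Hs1 Hs2].
    generalize (Rmin_l (tau - T e (S tau - ep)) (T e (S tau + ep) - tau))
               (Rmin_r (tau - T e (S tau - ep)) (T e (S tau + ep) - tau)). intros Q1 Q2.
    destruct (HS s) as [Is Ts].
    assert (S tau - ep < S s).
    { destruct (Rlt_or_le (S tau - ep) (S s)) as [h|h]; auto.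
      apply (T_le e) in h; auto. lra. }
    assert (S s < S tau + ep).
    { destruct (Rlt_or_le (S s) (S tau + ep)) as [h|h]; auto.
      apply (T_le e) in h; auto. lra. }
    apply Rabs_def1; lra. }
  intros tau.
  assert (Prf : forall a, S (tau - 1) <= a <= S (tau + 1) -> derivable_pt (T e) a).
  { intros a Ha. apply ex_derive_Reals_0. exists (ff e a). apply T_der; auto.
    apply (In_conv e (S (tau - 1)) (S (tau + 1))); auto. apply HS. apply HS. }
  assert (Prg : S (tau - 1) <= S tau <= S (tau + 1)) by (split; apply Hmono; lra).
  assert (HD := derivable_pt_lim_recip_interv (T e) S (tau - 1) (tau + 1) tau Prf (Hcont tau)
     ltac:(lra) ltac:(lra) Prg).
  destruct (HS tau) as [It Tt].
  assert (Hff : Derive (T e) (S tau) = ff e (S tau)) by (apply is_derive_unique; apply T_der; auto).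
  assert (Hh : 0 < hh e (S tau)) by (apply In_h; auto).
  assert (HD2 : derivable_pt_lim S tau (1 / derive_pt (T e) (S tau) (Prf (S tau) Prg))).
  { apply HD. intros z _. unfold comp, id. apply HS.
    rewrite Derive_Reals, Hff. apply Rgt_not_eq, ff_pos. lra. }
  rewrite Derive_Reals, Hff in HD2.
  apply is_derive_Reals. replace (hh e (S tau) * hh e (S tau)) with (1 / ff e (S tau)). exact HD2.
  unfold ff. field. lra.
Qed.


Lemma frame al be : exists e c1 s1, 0 <= e /\ c1 ^ 2 + s1 ^ 2 = 1 /\ al = e * c1 /\ be = e * s1.
Proof.
  set (e := sqrt (al ^ 2 + be ^ 2)).
  assert (He : 0 <= e) by apply sqrt_pos.
  assert (He2 : e ^ 2 = al ^ 2 + be ^ 2) by (unfold e; rewrite pow2_sqrt; nra).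
  destruct (Req_dec e 0) as [E|E].
  - exists e, 1, 0. rewrite E in He2. split; auto. split; [ring|]. split; nra.
  - exists e, (al / e), (be / e). split; auto. split. field_simplify; auto. rewrite <- He2. field; auto.
    split; field; auto.
Qed.

Lemma unif_id (x y : R -> R) t : ~ collision x y t ->
  rad x y t = Al x y t * x t + Be x y t * y t + Cm x y t ^ 2.
Proof.
  intros Hn. assert (Hp := rad_pos x y t Hn). assert (H2 := rad_sq x y t).
  unfold Al, Be, Cm. field_simplify; [|lra]. rewrite <- H2. field. lra.
Qed.

Lemma consts (x y : R -> R) : (forall t, ~ collision x y t) -> (forall t, newton_at x y t) ->
  forall t, Cm x y t = Cm x y 0 /\ Al x y t = Al x y 0 /\ Be x y t = Be x y 0.
Proof.
  intros Hn Hnt t. split; [|split]; apply const_R; intros s.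
  apply dCm; auto. apply dAl; auto. apply dBe; auto.
Qed.


Lemma cover (x y : R -> R) : (forall t, ~ collision x y t) -> (forall t, newton_at x y t) ->
  Cm x y 0 <> 0 ->
  forall P, unifocal (Al x y 0) (Be x y 0) (Cm x y 0 ^ 2) P -> exists t, P = (x t, y t).
Proof.
  intros Hn Hnt HC0 P HP.
  set (C := Cm x y 0). set (al := Al x y 0). set (be := Be x y 0).
  assert (HCd : C = Cm x y 0) by reflexivity. assert (Hald : al = Al x y 0) by reflexivity.
  assert (Hbed : be = Be x y 0) by reflexivity. clearbody C al be.
  assert (Hk : forall t, Cm x y t = C /\ Al x y t = al /\ Be x y t = be).
  { intros t. destruct (consts x y Hn Hnt t) as [h1 [h2 h3]]. rewrite HCd, Hald, Hbed; auto. }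
  destruct (frame al be) as [e [c1 [s1 [He [Hcs [Hal Hbe]]]]]].
  assert (HC2 : 0 < C ^ 2) by (apply pow2_gt_0; rewrite HCd; auto).
  set (r := rad x y). assert (Hr : forall t, 0 < r t) by (intros; apply rad_pos; auto).
  assert (Hr2 : forall t, r t ^ 2 = x t ^ 2 + y t ^ 2) by (intros; apply rad_sq).
  assert (Hid : forall t, r t = al * x t + be * y t + C ^ 2).
  { intros t. destruct (Hk t) as [h1 [h2 h3]]. rewrite <- h1, <- h2, <- h3.
    unfold r. rewrite unif_id; auto; try ring. }
  set (U1 := fun t => (c1 * x t + s1 * y t) / r t).
  set (U2 := fun t => (- s1 * x t + c1 * y t) / r t).
  assert (HU : forall t, U1 t ^ 2 + U2 t ^ 2 = 1).
  { intros t. unfold U1, U2. specialize (Hr t). specialize (Hr2 t).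
    assert (E : (c1 * x t + s1 * y t) ^ 2 + (- s1 * x t + c1 * y t) ^ 2 = (c1^2+s1^2) * (x t^2 + y t^2)) by ring.
    rewrite Hcs, <- Hr2 in E.
    transitivity (((c1 * x t + s1 * y t) ^ 2 + (- s1 * x t + c1 * y t) ^ 2) / r t ^ 2). field; lra.
    rewrite E. field; lra. }
  assert (Hhu : forall t, 1 - e * U1 t = C ^ 2 / r t).
  { intros t. unfold U1. assert (Q := Hid t). specialize (Hr t).
    replace (C ^ 2) with (r t - al * x t - be * y t) by lra. rewrite Hal, Hbe. field. lra. }
  destruct (ang (U1 0) (U2 0) (HU 0)) as [pi [Hpi [Hcpi Hspi]]].
  assert (Ipi : In e pi).
  { apply h_In; auto. unfold hh. rewrite Hcpi, Hhu. apply Rdiv_lt_0_compat; auto. }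
  set (om := fun t => C / (r t * r t)).
  assert (Hrd : forall t, is_derive r t ((x t * Derive x t + y t * Derive y t) / r t)).
  { intros t. destruct (nt_facts x y t (Hnt t)) as [Dx [Dy _]]. apply is_derive_rad; auto. }
  assert (Hom_c : forall t, continuous om t).
  { intros t. apply (@ex_derive_continuous R_AbsRing R_NormedModule). eexists.
    apply D_div. apply D_const. apply D_mult; apply Hrd. specialize (Hr t). nra. }
  set (th := fun t => pi + RInt om 0 t).
  assert (Hth : forall t, is_derive th t (om t)).
  { intros t. eapply is_derive_eq. apply D_plus. apply D_const.
    apply (is_derive_RInt om (fun b => RInt om 0 b) 0 t).
    apply (loc_of _ t 1); [lra|]. intros b _. apply (@RInt_correct R_CompleteNormedModule).
    apply (@ex_RInt_continuous R_CompleteNormedModule). intros; apply Hom_c. apply Hom_c.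
    req; ring. }
  assert (Hth0 : th 0 = pi) by (unfold th; rewrite RInt_point; unfold zero; simpl; ring).
  assert (HdU : forall t, is_derive U1 t (- om t * U2 t) /\ is_derive U2 t (om t * U1 t)).
  { intros t. assert (Hx := dux x y t (Hn t) (Hnt t)). assert (Hy := duy x y t (Hn t) (Hnt t)).
    destruct (Hk t) as [h1 _]. rewrite h1 in Hx, Hy. specialize (Hr t).
    split.
    - eapply D_ext with (fun s => c1 * (x s / rad x y s) + s1 * (y s / rad x y s)).
      intros s; unfold U1, r; field. apply Rgt_not_eq, rad_pos; auto.
      eapply is_derive_eq. apply D_plus; apply is_derive_scal; eauto.
      unfold om, U2, r. req. field. fold (r t); lra.
    - eapply D_ext with (fun s => - s1 * (x s / rad x y s) + c1 * (y s / rad x y s)).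
      intros s; unfold U2, r; field. apply Rgt_not_eq, rad_pos; auto.
      eapply is_derive_eq. apply D_plus; apply is_derive_scal; eauto.
      unfold om, U1, r. req. field. fold (r t); lra. }
  assert (Hang : forall t, cos (th t) = U1 t /\ sin (th t) = U2 t).
  { set (D := fun t => (cos (th t) - U1 t) ^ 2 + (sin (th t) - U2 t) ^ 2).
    assert (HD : forall t, D t = D 0).
    { intros t0. apply (const_R D). intros t. destruct (HdU t) as [D1 D2].
      assert (Hc := D_comp cos th t _ _ (D_cos (th t)) (Hth t)).
      assert (Hs := D_comp sin th t _ _ (D_sin (th t)) (Hth t)).
      eapply D_ext with (fun t => (cos (th t) - U1 t) * (cos (th t) - U1 t) + (sin (th t) - U2 t) * (sin (th t) - U2 t)).
      intros s; unfold D; ring.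
      eapply is_derive_eq. apply D_plus; apply D_mult; apply D_minus; eauto.
      cbv beta. req. ring. }
    intros t. specialize (HD t). unfold D in HD. rewrite Hth0, Hcpi, Hspi in HD.
    assert (Z : (cos (th t) - U1 t) ^ 2 + (sin (th t) - U2 t) ^ 2 = 0) by (rewrite HD; ring).
    assert (Z1 : (cos (th t) - U1 t) ^ 2 = 0) by (generalize (pow2_ge_0 (cos (th t) - U1 t)) (pow2_ge_0 (sin (th t) - U2 t)); lra).
    assert (Z2 : (sin (th t) - U2 t) ^ 2 = 0) by (generalize (pow2_ge_0 (cos (th t) - U1 t)) (pow2_ge_0 (sin (th t) - U2 t)); lra).
    simpl in Z1, Z2. rewrite Rmult_1_r in Z1, Z2. apply Rsqr_0_uniq in Z1. apply Rsqr_0_uniq in Z2. split; lra. }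
  assert (Hhth : forall t, hh e (th t) = C ^ 2 / r t).
  { intros t. unfold hh. rewrite (proj1 (Hang t)). apply Hhu. }
  assert (Hthc : continuity th) by (intros t; eapply derive_cont; apply Hth).
  assert (Ith : forall t, In e (th t)).
  { intros t. apply (In_bound e (th 0)); auto. rewrite Hth0; auto.
    intros c Hc. destruct (IVT_gen th 0 t c Hthc Hc) as [s [_ Hs]].
    rewrite <- Hs, Hhth. apply Rdiv_lt_0_compat; auto. }
  assert (HT : forall t, T e (th t) - t / C ^ 3 = T e (th 0) - 0 / C ^ 3).
  { intros t0. apply (const_R (fun t => T e (th t) - t / C ^ 3)). intros t. eapply is_derive_eq.
    apply D_minus. apply (D_comp (T e) th t). apply T_der; auto. apply Hth.
    apply D_div. apply D_id. apply D_const. apply pow_nonzero; rewrite HCd; auto.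
    unfold om, ff. rewrite Hhth. req. field. split; [rewrite HCd; auto|]. specialize (Hr t). lra. }
  unfold unifocal in HP. rewrite <- HCd, <- Hald, <- Hbed in HP. set (rP := radius P) in HP.
  assert (HP0 : P <> (0,0)).
  { intro E. assert (rP ^ 2 = 0) by (unfold rP; rewrite radius_sq, E; simpl; ring).
    rewrite E in HP; simpl in HP. nra. }
  assert (HrP : 0 < rP) by (apply radius_pos; auto).
  assert (HrP2 : rP ^ 2 = fst P ^ 2 + snd P ^ 2) by apply radius_sq.
  set (V1 := (c1 * fst P + s1 * snd P) / rP). set (V2 := (- s1 * fst P + c1 * snd P) / rP).
  assert (HV : V1 ^ 2 + V2 ^ 2 = 1).
  { unfold V1, V2.
    assert (E : (c1 * fst P + s1 * snd P) ^ 2 + (- s1 * fst P + c1 * snd P) ^ 2 = (c1^2+s1^2) * (fst P^2 + snd P^2)) by ring.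
    rewrite Hcs, <- HrP2 in E.
    transitivity (((c1 * fst P + s1 * snd P) ^ 2 + (- s1 * fst P + c1 * snd P) ^ 2) / rP ^ 2). field; lra.
    rewrite E. field; lra. }
  assert (HhV : 1 - e * V1 = C ^ 2 / rP).
  { unfold V1. replace (C ^ 2) with (rP - al * fst P - be * snd P) by lra. rewrite Hal, Hbe. field. lra. }
  destruct (ang V1 V2 HV) as [ph [Hph [Hcph Hsph]]].
  assert (Iph : In e ph).
  { apply h_In; auto. unfold hh. rewrite Hcph, HhV. apply Rdiv_lt_0_compat; auto. }
  set (ts := (T e ph - T e (th 0)) * C ^ 3).
  assert (Hts : th ts = ph).
  { apply (T_inj e); auto. specialize (HT ts). unfold ts in HT |- *.
    assert (C ^ 3 <> 0) by (apply pow_nonzero; rewrite HCd; auto).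
    replace ((T e ph - T e (th 0)) * C ^ 3 / C ^ 3) with (T e ph - T e (th 0)) in HT by (field; rewrite HCd; auto).
    lra. }
  exists ts. destruct (Hang ts) as [A1 A2]. rewrite Hts, Hcph, Hsph in *.
  assert (Er : r ts = rP).
  { assert (E := Hhth ts). rewrite Hts in E. unfold hh in E. rewrite Hcph, HhV in E.
    specialize (Hr ts). apply (Rmult_eq_reg_l (C ^ 2)); [|lra].
    replace (C ^ 2 * r ts) with (C ^ 2 / rP * (r ts * rP)) by (field; lra).
    rewrite E. field; lra. }
  unfold U1, U2 in A1, A2. rewrite Er in A1, A2. unfold V1, V2 in A1, A2.
  destruct P as [Px Py]. cbn [fst snd] in *.
  assert (E1 : c1 * x ts + s1 * y ts = c1 * Px + s1 * Py).
  { apply (Rmult_eq_reg_r (/ rP)). symmetry; exact A1. apply Rgt_not_eq, Rinv_0_lt_compat; auto. }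
  assert (E2 : - s1 * x ts + c1 * y ts = - s1 * Px + c1 * Py).
  { apply (Rmult_eq_reg_r (/ rP)). symmetry; exact A2. apply Rgt_not_eq, Rinv_0_lt_compat; auto. }
  f_equal.
  - replace (x ts) with (c1 * (c1 * x ts + s1 * y ts) - s1 * (- s1 * x ts + c1 * y ts)).
    rewrite E1, E2. replace (c1 * (c1 * Px + s1 * Py) - s1 * (- s1 * Px + c1 * Py)) with ((c1^2 + s1^2) * Px) by ring.
    rewrite Hcs; ring.
    replace (c1 * (c1 * x ts + s1 * y ts) - s1 * (- s1 * x ts + c1 * y ts)) with ((c1^2 + s1^2) * x ts) by ring.
    rewrite Hcs; ring.
  - replace (y ts) with (s1 * (c1 * x ts + s1 * y ts) + c1 * (- s1 * x ts + c1 * y ts)).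
    rewrite E1, E2. replace (s1 * (c1 * Px + s1 * Py) + c1 * (- s1 * Px + c1 * Py)) with ((c1^2 + s1^2) * Py) by ring.
    rewrite Hcs; ring.
    replace (s1 * (c1 * x ts + s1 * y ts) + c1 * (- s1 * x ts + c1 * y ts)) with ((c1^2 + s1^2) * y ts) by ring.
    rewrite Hcs; ring.
Qed.


Lemma sc2 p : sin p ^ 2 + cos p ^ 2 = 1.
Proof. rewrite <- (sin2_cos2 p). unfold Rsqr. ring. Qed.

Ltac trig := apply Rminus_diag_uniq; field_simplify;
  [ lazymatch goal with
    | |- ?n / ?d = 0 => replace n with 0 by nsatz; unfold Rdiv; ring
    | |- ?n = 0 => nsatz end | .. ].

Lemma alg_VX c s e c1 s1 C : s^2 + c^2 = 1 -> C <> 0 -> 1 - e*c <> 0 ->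
  (1 - e*c)*(1 - e*c)/C^3 * ((C^2*(c1 * - s - s1*c)*(1 - e*c) - C^2*(c1*c - s1*s)*(e*s))/(1 - e*c)^2)
  = (- c1*s - s1*(c - e))/C.
Proof. intros; trig; auto. Qed.

Lemma alg_VY c s e c1 s1 C : s^2 + c^2 = 1 -> C <> 0 -> 1 - e*c <> 0 ->
  (1 - e*c)*(1 - e*c)/C^3 * ((C^2*(s1 * - s + c1*c)*(1 - e*c) - C^2*(s1*c + c1*s)*(e*s))/(1 - e*c)^2)
  = (- s1*s + c1*(c - e))/C.
Proof. intros; trig; auto. Qed.

Lemma alg_rad c s e c1 s1 C : s^2 + c^2 = 1 -> c1^2 + s1^2 = 1 -> 1 - e*c <> 0 ->
  (C^2 * (c1*c - s1*s) / (1 - e*c)) ^ 2 + (C^2 * (s1*c + c1*s) / (1 - e*c)) ^ 2 = (C^2 / (1 - e*c)) ^ 2.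
Proof. intros; trig; auto. Qed.

Lemma alg_Cm c s e c1 s1 C : s^2 + c^2 = 1 -> c1^2 + s1^2 = 1 -> C <> 0 -> 1 - e*c <> 0 ->
  C^2 * (c1*c - s1*s) / (1 - e*c) * ((- s1*s + c1*(c - e))/C) -
  C^2 * (s1*c + c1*s) / (1 - e*c) * ((- c1*s - s1*(c - e))/C) = C.
Proof. intros; trig; auto. Qed.

Lemma construct al be ga : 0 < ga -> exists x y : R -> R,
  (forall t, ~ collision x y t) /\ (forall t, newton_at x y t) /\
  (forall t, continuous x t /\ continuous y t) /\
  Cm x y 0 = sqrt ga /\ Al x y 0 = al /\ Be x y 0 = be.
Proof.
  intros Hga.
  destruct (frame al be) as [e [c1 [s1 [He [Hcs [Hal Hbe]]]]]].
  set (C := sqrt ga). assert (HC : 0 < C) by (apply sqrt_lt_R0; auto).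
  assert (HC2 : C ^ 2 = ga) by (unfold C; rewrite pow2_sqrt; lra).
  clearbody C.
  destruct (inverse_T e He) as [S [HS HSd]].
  set (th := fun t => S (t / C ^ 3)).
  assert (HC3 : C ^ 3 <> 0) by (apply pow_nonzero; lra).
  assert (Hth : forall t, is_derive th t (hh e (th t) * hh e (th t) / C ^ 3)).
  { intros t. unfold th. eapply is_derive_eq. apply (D_comp S (fun t => t / C ^ 3)). apply HSd.
    eapply is_derive_eq. apply D_div. apply D_id. apply D_const. auto. reflexivity.
    cbv beta. req. field. lra. }
  assert (Hh : forall t, 0 < hh e (th t)) by (intros; apply In_h; auto; apply HS).
  clearbody th.
  set (X := fun p => C ^ 2 * (c1 * cos p - s1 * sin p) / hh e p).
  set (Y := fun p => C ^ 2 * (s1 * cos p + c1 * sin p) / hh e p).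
  set (VX := fun p => (- c1 * sin p - s1 * (cos p - e)) / C).
  set (VY := fun p => (- s1 * sin p + c1 * (cos p - e)) / C).
  assert (HdX : forall t, is_derive (fun t => X (th t)) t (VX (th t))).
  { intros t. eapply is_derive_eq. apply (D_comp X th). unfold X.
    apply D_div. apply is_derive_scal. apply D_minus; apply is_derive_scal. apply D_cos. apply D_sin.
    apply dhh. specialize (Hh t). lra. apply Hth.
    unfold VX. cbv beta. req. specialize (Hh t). unfold hh in *. apply alg_VX; [apply sc2|lra|lra]. }
  assert (HdY : forall t, is_derive (fun t => Y (th t)) t (VY (th t))).
  { intros t. eapply is_derive_eq. apply (D_comp Y th). unfold Y.
    apply D_div. apply is_derive_scal. apply D_plus; apply is_derive_scal. apply D_cos. apply D_sin.
    apply dhh. specialize (Hh t). lra. apply Hth.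
    unfold VY. cbv beta. req. specialize (Hh t). unfold hh in *. apply alg_VY; [apply sc2|lra|lra]. }
  assert (Hrad : forall t, radius (X (th t), Y (th t)) = C ^ 2 / hh e (th t)).
  { intros t. specialize (Hh t). unfold radius. cbn [fst snd]. apply sqrt_lem_1.
    unfold X, Y. generalize (pow2_ge_0 (C ^ 2 * (c1 * cos (th t) - s1 * sin (th t)) / hh e (th t)))
      (pow2_ge_0 (C ^ 2 * (s1 * cos (th t) + c1 * sin (th t)) / hh e (th t))). lra.
    apply Rlt_le, Rdiv_lt_0_compat; auto. apply pow_lt; auto.
    unfold X, Y. unfold hh in *. transitivity ((C ^ 2 / (1 - e * cos (th t))) ^ 2). ring.
    symmetry. apply alg_rad; [apply sc2|auto|lra]. }
  assert (DX : forall t, Derive (fun t => X (th t)) t = VX (th t)) by (intros; apply is_derive_unique; auto).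
  assert (DY : forall t, Derive (fun t => Y (th t)) t = VY (th t)) by (intros; apply is_derive_unique; auto).
  assert (Hnc : forall t, ~ collision (fun t => X (th t)) (fun t => Y (th t)) t).
  { intros t [E1 E2]. specialize (Hrad t). rewrite E1, E2 in Hrad. unfold radius in Hrad. cbn [fst snd] in Hrad.
    replace (0 ^ 2 + 0 ^ 2) with 0 in Hrad by ring. rewrite sqrt_0 in Hrad.
    assert (0 < C ^ 2 / hh e (th t)) by (apply Rdiv_lt_0_compat; auto; apply pow_lt; auto). lra. }
  exists (fun t => X (th t)), (fun t => Y (th t)).
  split; [exact Hnc|]. split; [|split; [|split; [|split]]].
  - intros t. unfold newton_at. rewrite Hrad. split; [eexists; apply HdX|]. split; [eexists; apply HdY|].
    specialize (Hh t). split.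
    + eapply D_ext. intros s; symmetry; apply DX. eapply is_derive_eq.
      apply (D_comp VX th). unfold VX. apply D_div. apply D_minus. apply is_derive_scal. apply D_sin.
      apply is_derive_scal. apply D_minus. apply D_cos. apply D_const. apply D_const. lra. apply Hth.
      unfold X. cbv beta. req. field. split; lra.
    + eapply D_ext. intros s; symmetry; apply DY. eapply is_derive_eq.
      apply (D_comp VY th). unfold VY. apply D_div. apply D_plus. apply is_derive_scal. apply D_sin.
      apply is_derive_scal. apply D_minus. apply D_cos. apply D_const. apply D_const. lra. apply Hth.
      unfold Y. cbv beta. req. field. split; lra.
  - intros t. split; apply (@ex_derive_continuous R_AbsRing R_NormedModule); eexists; [apply HdX|apply HdY].
  - unfold Cm. rewrite DX, DY. specialize (Hh 0). unfold X, Y, VX, VY. unfold hh in *.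
    apply alg_Cm; [apply sc2|auto|lra|lra].
  - assert (HCm : Cm (fun t => X (th t)) (fun t => Y (th t)) 0 = C).
    { unfold Cm. rewrite DX, DY. specialize (Hh 0). unfold X, Y, VX, VY. unfold hh in *.
      apply alg_Cm; [apply sc2|auto|lra|lra]. }
    unfold Al. rewrite HCm, DY. unfold rad. rewrite Hrad. specialize (Hh 0). unfold X, VY.
    rewrite Hal. req. field. split; lra.
  - assert (HCm : Cm (fun t => X (th t)) (fun t => Y (th t)) 0 = C).
    { unfold Cm. rewrite DX, DY. specialize (Hh 0). unfold X, Y, VX, VY. unfold hh in *.
      apply alg_Cm; [apply sc2|auto|lra|lra]. }
    unfold Be. rewrite HCm, DX. unfold rad. rewrite Hrad. specialize (Hh 0). unfold Y, VX.
    rewrite Hbe. req. field. split; lra.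
Qed.


Lemma radius_scale k v1 v2 : 0 <= k -> radius (k * v1, k * v2) = k * radius (v1, v2).
Proof.
  intros Hk. unfold radius; cbn [fst snd].
  replace ((k * v1) ^ 2 + (k * v2) ^ 2) with (k ^ 2 * (v1 ^ 2 + v2 ^ 2)) by ring.
  rewrite sqrt_mult; [|apply pow2_ge_0|nra]. rewrite sqrt_pow2; auto.
Qed.

Lemma conic_pt al be ga v1 v2 : 0 < ga -> 0 < radius (v1, v2) - (al * v1 + be * v2) ->
  unifocal al be ga ((ga / (radius (v1, v2) - (al * v1 + be * v2))) * v1,
                     (ga / (radius (v1, v2) - (al * v1 + be * v2))) * v2).
Proof.
  intros Hga Hd. unfold unifocal. cbn [fst snd].
  rewrite radius_scale by (apply Rlt_le, Rdiv_lt_0_compat; auto). field. lra.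
Qed.

Lemma irred_aux al be ga n1 n2 a b c : 0 < ga -> (n1, n2) <> (0, 0) -> al * n1 + be * n2 <= 0 ->
  al * (- n2) + be * n1 = 0 ->
  (forall p, unifocal al be ga p -> a * fst p + b * snd p + c = 0) -> a = 0 /\ b = 0.
Proof.
  intros Hga Hn HW Hm H.
  set (W := al * n1 + be * n2) in *.
  set (L1 := radius (n1, n2)). set (L2 := radius (n1 - n2, n2 + n1)).
  assert (HL1 : 0 < L1) by (apply radius_pos; auto).
  assert (Hq : 0 < n1 ^ 2 + n2 ^ 2).
  { destruct (Req_dec n1 0); destruct (Req_dec n2 0); subst; try (exfalso; apply Hn; reflexivity); nra. }
  assert (HL12 : L1 < L2).
  { unfold L1, L2, radius; cbn [fst snd]. apply sqrt_lt_1; nra. }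
  assert (HL3 : radius (n1 + n2, n2 - n1) = L2).
  { unfold L2, radius; cbn [fst snd]. f_equal; ring. }
  assert (P1 := conic_pt al be ga n1 n2 Hga ltac:(fold L1; fold W; lra)).
  assert (P2 := conic_pt al be ga (n1 - n2) (n2 + n1) Hga ltac:(fold L2;
     replace (al * (n1 - n2) + be * (n2 + n1)) with W by (unfold W; lra); lra)).
  assert (P3 := conic_pt al be ga (n1 + n2) (n2 - n1) Hga ltac:(rewrite HL3;
     replace (al * (n1 + n2) + be * (n2 - n1)) with W by (unfold W; lra); lra)).
  fold L1 W in P1. fold L2 in P2. rewrite HL3 in P3.
  replace (al * (n1 - n2) + be * (n2 + n1)) with W in P2 by (unfold W; lra).
  replace (al * (n1 + n2) + be * (n2 - n1)) with W in P3 by (unfold W; lra).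
  apply H in P1; apply H in P2; apply H in P3. cbn [fst snd] in P1, P2, P3.
  set (k1 := ga / (L1 - W)) in *. set (k2 := ga / (L2 - W)) in *.
  assert (Hk2 : 0 < k2) by (apply Rdiv_lt_0_compat; lra).
  assert (Hk12 : k2 < k1).
  { unfold k1, k2. unfold Rdiv. apply Rmult_lt_compat_l; auto. apply Rinv_lt_contravar; nra. }
  assert (HB : a * (- n2) + b * n1 = 0).
  { assert (E : 2 * k2 * (a * (- n2) + b * n1) = (a * (k2 * (n1 - n2)) + b * (k2 * (n2 + n1)) + c)
       - (a * (k2 * (n1 + n2)) + b * (k2 * (n2 - n1)) + c)) by ring.
    rewrite P2, P3, Rminus_0_r in E. apply Rmult_integral in E. destruct E; auto. lra. }
  assert (HA : a * n1 + b * n2 = 0).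
  { assert (E : (k1 - k2) * (a * n1 + b * n2) = (a * (k1 * n1) + b * (k1 * n2) + c)
       - ((a * (k2 * (n1 - n2)) + b * (k2 * (n2 + n1)) + c) + (a * (k2 * (n1 + n2)) + b * (k2 * (n2 - n1)) + c)) / 2) by field.
    rewrite P1, P2, P3 in E. replace (0 - (0 + 0) / 2) with 0 in E by field.
    apply Rmult_integral in E. destruct E; auto. lra. }
  assert (Ea : a * (n1 ^ 2 + n2 ^ 2) = 0).
  { replace (a * (n1 ^ 2 + n2 ^ 2)) with (n1 * (a * n1 + b * n2) - n2 * (a * (- n2) + b * n1)) by ring.
    rewrite HA, HB; ring. }
  assert (Eb : b * (n1 ^ 2 + n2 ^ 2) = 0).
  { replace (b * (n1 ^ 2 + n2 ^ 2)) with (n2 * (a * n1 + b * n2) + n1 * (a * (- n2) + b * n1)) by ring.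
    rewrite HA, HB; ring. }
  apply Rmult_integral in Ea. apply Rmult_integral in Eb. split; lra.
Qed.

Lemma irred_conic al be ga : 0 < ga -> irreducible (unifocal al be ga).
Proof.
  intros Hga [a [b [c [Hab H]]]]. apply Hab.
  destruct (classic (al = 0 /\ be = 0)) as [[E1 E2]|Hne].
  - destruct (irred_aux al be ga 1 0 a b c Hga) as [-> ->]; auto.
    intro E; injection E; lra. subst; lra. subst; lra.
  - destruct (irred_aux al be ga (- al) (- be) a b c Hga) as [-> ->]; auto.
    intro E; injection E; intros; apply Hne; split; lra. nra. ring.
Qed.


Lemma part1 K : keplerian_branch K -> irreducible K ->
     exists al be ga, 0 < ga /\ (forall p, K p <-> unifocal al be ga p) /\
       (forall al' be' ga', 0 < ga' -> (forall p, K p <-> unifocal al' be' ga' p) ->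
          al' = al /\ be' = be /\ ga' = ga).
Proof.
  intros [x [y [Hes HK]]] Hirr.
  assert (Hnc : forall t, ~ collision x y t).
  { intros t0 Hc. destruct (collision_line x y Hes t0 Hc) as [u1 [u2 [Hu Hl]]]. apply Hirr.
    exists u2, (- u1), 0. split.
    - intro E; injection E; intros; apply Hu; f_equal; lra.
    - intros p Hp. apply HK in Hp. destruct Hp as [t ->]. cbn [fst snd]. specialize (Hl t). lra. }
  destruct Hes as [Hcont [Hnewt _]].
  assert (Hnt : forall t, newton_at x y t) by auto.
  assert (HC0 : Cm x y 0 <> 0).
  { intros HC. apply Hirr. exists (Be x y 0), (- Al x y 0), 0.
    assert (Hk : forall t, Al x y t = x t / rad x y t /\ Be x y t = y t / rad x y t).
    { intros t. destruct (consts x y Hnc Hnt t) as [h1 [h2 h3]].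
      unfold Al, Be. rewrite h1, HC. split; ring. }
    split.
    - intro E; injection E; intros E1 E2.
      destruct (Hk 0) as [k1 k2]. assert (Hr := rad_pos x y 0 (Hnc 0)). assert (H2 := rad_sq x y 0).
      assert (Hs : (x 0 / rad x y 0) ^ 2 + (y 0 / rad x y 0) ^ 2 = 1).
      { transitivity ((x 0 ^ 2 + y 0 ^ 2) / rad x y 0 ^ 2). field; lra. rewrite <- H2. field; lra. }
      rewrite <- k1, <- k2 in Hs. assert (Al x y 0 = 0) by lra. rewrite H, E2 in Hs. lra.
    - intros p Hp. apply HK in Hp. destruct Hp as [t ->]. cbn [fst snd].
      destruct (consts x y Hnc Hnt t) as [_ [h2 h3]]. rewrite <- h2, <- h3.
      destruct (Hk t) as [k1 k2]. rewrite k1, k2. assert (Hr := rad_pos x y t (Hnc t)). field. lra. }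
  assert (HKu : forall p, K p <-> unifocal (Al x y 0) (Be x y 0) (Cm x y 0 ^ 2) p).
  { intros p; split.
    - intros Hp. apply HK in Hp. destruct Hp as [t ->]. unfold unifocal; cbn [fst snd].
      destruct (consts x y Hnc Hnt t) as [h1 [h2 h3]]. rewrite <- h1, <- h2, <- h3.
      fold (rad x y t). apply unif_id; auto.
    - intros Hp. apply HK. apply (cover x y Hnc Hnt HC0 p Hp). }
  exists (Al x y 0), (Be x y 0), (Cm x y 0 ^ 2). split; [apply pow2_gt_0; auto|]. split; auto.
  intros al' be' ga' Hga' HK'.
  assert (Hlin : forall p, K p -> (al' - Al x y 0) * fst p + (be' - Be x y 0) * snd p + (ga' - Cm x y 0 ^ 2) = 0).
  { intros p Hp. assert (U1 := proj1 (HK' p) Hp). assert (U2 := proj1 (HKu p) Hp).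
    unfold unifocal in U1, U2. lra. }
  assert (Hab : al' - Al x y 0 = 0 /\ be' - Be x y 0 = 0).
  { destruct (classic ((al' - Al x y 0, be' - Be x y 0) = (0, 0))) as [E|E].
    - injection E; auto.
    - exfalso. apply Hirr. exists (al' - Al x y 0), (be' - Be x y 0), (ga' - Cm x y 0 ^ 2). split; auto. }
  assert (Hp0 : K (x 0, y 0)) by (apply HK; exists 0; reflexivity).
  specialize (Hlin _ Hp0). destruct Hab as [E1 E2]. rewrite E1, E2 in Hlin.
  split; [lra|split; lra].
Qed.

Lemma part2 al be ga : 0 < ga -> keplerian_branch (unifocal al be ga) /\ irreducible (unifocal al be ga).
Proof.
  intros Hga. split; [|apply irred_conic; auto].
  destruct (construct al be ga Hga) as [x [y [Hnc [Hnt [Hcont [HC [HA HB]]]]]]].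
  exists x, y. split.
  - split; auto. split; auto. intros t0 Hc. exfalso; apply (Hnc t0 Hc).
  - assert (HC2 : Cm x y 0 ^ 2 = ga) by (rewrite HC, pow2_sqrt; lra).
    assert (HC0 : Cm x y 0 <> 0) by (rewrite HC; apply Rgt_not_eq, sqrt_lt_R0; auto).
    intros p; split.
    + intros Hp. apply (cover x y Hnc Hnt HC0 p). rewrite HA, HB, HC2; auto.
    + intros [t ->]. unfold unifocal; cbn [fst snd].
      destruct (consts x y Hnc Hnt t) as [h1 [h2 h3]].
      rewrite <- HA, <- HB, <- HC2, <- h1, <- h2, <- h3.
      fold (rad x y t). apply unif_id; auto.
Qed.

Lemma part3 (A : R * R) : A <> (0, 0) ->
     exists n1 n2 n3 d, (n1, n2, n3) <> (0, 0, 0) /\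
       (forall al be ga, 0 < ga ->
          (unifocal al be ga A <-> n1 * al + n2 * be + n3 * ga = d)) /\
       (exists al be, n1 * al + n2 * be + n3 * 0 = d).
Proof.
  intros HA. destruct A as [xa ya].
  assert (Hq : 0 < xa ^ 2 + ya ^ 2).
  { destruct (Req_dec xa 0); destruct (Req_dec ya 0); subst; try (exfalso; apply HA; reflexivity); nra. }
  exists xa, ya, 1, (radius (xa, ya)). split; [intro E; injection E; lra|]. split.
  - intros al be ga _. unfold unifocal; cbn [fst snd]. split; intro; lra.
  - exists (radius (xa, ya) * xa / (xa ^ 2 + ya ^ 2)), (radius (xa, ya) * ya / (xa ^ 2 + ya ^ 2)).
    field. lra.
Qed.


Lemma part4 (A B : R * R) : ~ same_ray A B ->
     exists p1 p2 p3 d1 d2 d3, (d1, d2, d3) <> (0, 0, 0) /\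
       (forall al be ga, 0 < ga ->
          (unifocal al be ga A /\ unifocal al be ga B <->
           exists t, al = p1 + t * d1 /\ be = p2 + t * d2 /\ ga = p3 + t * d3)) /\
       (~ O_in_open_segment A B -> exists t, p3 + t * d3 = 0) /\
       (O_in_open_segment A B ->
          (forall t, 0 < p3 + t * d3) /\
          (forall t t', p3 + t * d3 = p3 + t' * d3)).
Proof.
  intros Hns. destruct A as [xa ya], B as [xb yb].
  assert (HA : (xa, ya) <> (0, 0)).
  { intro E; injection E; intros; subst. apply Hns.
    destruct (classic ((xb, yb) = (0, 0))) as [E'|E'].
    - injection E'; intros; subst. exists 1, 0, 0, 0. split. intro E2; injection E2; lra.
      repeat split; try lra; f_equal; ring.
    - exists xb, yb, 0, 1. split; auto. repeat split; try lra; f_equal; ring. }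
  assert (HB : (xb, yb) <> (0, 0)).
  { intro E; injection E; intros; subst. apply Hns.
    exists xa, ya, 1, 0. split; auto. repeat split; try lra; f_equal; ring. }
  assert (Hq : 0 < xa ^ 2 + ya ^ 2).
  { destruct (Req_dec xa 0); destruct (Req_dec ya 0); subst; try (exfalso; apply HA; reflexivity); nra. }
  set (rA := radius (xa, ya)). set (rB := radius (xb, yb)).
  assert (HrA : 0 < rA) by (apply radius_pos; auto).
  set (D := xa * yb - xb * ya).
  destruct (Req_dec D 0) as [HD|HD].
  -
    set (mu := (xa * xb + ya * yb) / (xa ^ 2 + ya ^ 2)).
    assert (Exb : xb = mu * xa).
    { assert (E : xb * (xa ^ 2 + ya ^ 2) - (xa * xb + ya * yb) * xa = - ya * D) by (unfold D; ring).
      rewrite HD in E. unfold mu. apply (Rmult_eq_reg_r (xa ^ 2 + ya ^ 2)); [|lra].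
      replace ((xa * xb + ya * yb) / (xa ^ 2 + ya ^ 2) * xa * (xa ^ 2 + ya ^ 2)) with ((xa * xb + ya * yb) * xa) by (field; lra).
      lra. }
    assert (Eyb : yb = mu * ya).
    { assert (E : yb * (xa ^ 2 + ya ^ 2) - (xa * xb + ya * yb) * ya = xa * D) by (unfold D; ring).
      rewrite HD in E. unfold mu. apply (Rmult_eq_reg_r (xa ^ 2 + ya ^ 2)); [|lra].
      replace ((xa * xb + ya * yb) / (xa ^ 2 + ya ^ 2) * ya * (xa ^ 2 + ya ^ 2)) with ((xa * xb + ya * yb) * ya) by (field; lra).
      lra. }
    assert (Hmu : mu < 0).
    { apply Rnot_le_lt. intro Hm. apply Hns. exists xa, ya, 1, mu. split; auto.
      split; [lra|]. split; auto. split; [f_equal; ring|]. rewrite Exb, Eyb. reflexivity. }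
    set (lam := - mu). assert (Hlam : 0 < lam) by (unfold lam; lra).
    assert (HrB : rB = lam * rA).
    { unfold rB, rA. rewrite Exb, Eyb. replace (mu * xa) with (lam * (- xa)) by (unfold lam; ring).
      replace (mu * ya) with (lam * (- ya)) by (unfold lam; ring).
      rewrite radius_scale by lra. f_equal. unfold radius; cbn [fst snd]. f_equal; ring. }
    set (g0 := 2 * lam * rA / (1 + lam)).
    assert (Hg0 : 0 < g0) by (unfold g0; apply Rdiv_lt_0_compat; nra).
    set (c := (rA - g0) / (xa ^ 2 + ya ^ 2)).
    exists (c * xa), (c * ya), g0, ya, (- xa), 0. split.
    { intro E; injection E; intros. apply HA. f_equal; lra. }
    split; [|split].
    + intros al be ga Hga. unfold unifocal; cbn [fst snd]. fold rA rB. split.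
      * intros [U1 U2]. rewrite HrB, Exb, Eyb in U2.
        assert (Hg : ga = g0).
        { unfold g0. apply (Rmult_eq_reg_l (1 + lam)); [|lra]. field_simplify; [|lra].
          replace mu with (- lam) in U2 by (unfold lam; ring). nra. }
        exists ((al * ya - be * xa) / (xa ^ 2 + ya ^ 2)). split; [|split].
        -- unfold c. replace (rA - g0) with (al * xa + be * ya) by lra. field. lra.
        -- unfold c. replace (rA - g0) with (al * xa + be * ya) by lra. field. lra.
        -- lra.
      * intros [t [E1 [E2 E3]]]. subst al be ga. unfold c. split.
        -- field. lra.
        -- rewrite HrB, Exb, Eyb. replace mu with (- lam) by (unfold lam; ring).
           unfold g0. field. split; lra.
    + intros Hno. exfalso. apply Hno. exists (1 / (1 + lam)). split.
      split; apply Rdiv_lt_0_compat || idtac; try lra. apply (Rmult_lt_reg_r (1 + lam)); [lra|].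
      field_simplify; lra.
      cbn [fst snd]. rewrite Exb, Eyb. replace mu with (- lam) by (unfold lam; ring). split; field; lra.
    + intros _. split; intros; lra.
  -
    exists ((rA * yb - rB * ya) / D), ((xa * rB - xb * rA) / D), 0, (ya - yb), (xb - xa), D.
    split; [intro E; injection E; intros; apply HD; auto|]. split; [|split].
    + intros al be ga Hga. unfold unifocal; cbn [fst snd]. fold rA rB. split.
      * intros [U1 U2]. exists (ga / D). rewrite U1, U2. unfold D in *.
        split; [|split]; field; auto.
      * intros [t [E1 [E2 E3]]]. subst al be ga. unfold D in *. split; field; auto.
    + intros _. exists 0. ring.
    + intros [s [Hs [E1 E2]]]. exfalso. apply HD. cbn [fst snd] in E1, E2.
      assert (E : (1 - s) * D = 0).
      { unfold D. replace ((1 - s) * (xa * yb - xb * ya)) with (((1 - s) * xa + s * xb) * yb - ((1 - s) * ya + s * yb) * xb) by ring.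
        rewrite E1, E2. ring. }
      apply Rmult_integral in E. destruct E; [lra|auto].
Qed.


Theorem lemma3 :
  (* bijection  branch |-> (alpha, beta, gamma)  onto H = R x R x ]0, +oo[ *)
  (forall K : R * R -> Prop, keplerian_branch K -> irreducible K ->
     exists al be ga, 0 < ga /\ (forall p, K p <-> unifocal al be ga p) /\
       (forall al' be' ga', 0 < ga' -> (forall p, K p <-> unifocal al' be' ga' p) ->
          al' = al /\ be' = be /\ ga' = ga)) /\
  (forall al be ga, 0 < ga ->
     keplerian_branch (unifocal al be ga) /\ irreducible (unifocal al be ga)) /\
  (* branches through a point A <> O : a plane cutting {gamma = 0} *)
  (forall A : R * R, A <> (0, 0) ->
     exists n1 n2 n3 d, (n1, n2, n3) <> (0, 0, 0) /\
       (forall al be ga, 0 < ga ->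
          (unifocal al be ga A <-> n1 * al + n2 * be + n3 * ga = d)) /\
       (exists al be, n1 * al + n2 * be + n3 * 0 = d)) /\
  (* branches through A and B not on a common ray : a straight line *)
  (forall A B : R * R, ~ same_ray A B ->
     exists p1 p2 p3 d1 d2 d3, (d1, d2, d3) <> (0, 0, 0) /\
       (forall al be ga, 0 < ga ->
          (unifocal al be ga A /\ unifocal al be ga B <->
           exists t, al = p1 + t * d1 /\ be = p2 + t * d2 /\ ga = p3 + t * d3)) /\
       (~ O_in_open_segment A B -> exists t, p3 + t * d3 = 0) /\
       (O_in_open_segment A B ->
          (forall t, 0 < p3 + t * d3) /\
          (forall t t', p3 + t * d3 = p3 + t' * d3))).
Proof.
  split; [exact part1|]. split; [exact part2|]. split; [exact part3|exact part4].
Qed.
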